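(* Equivalence $\sim$ of extremal assignments of order $n$ is an equivalence relation, i.e. it is reflexive, symmetric and transitive.
   Context: Let $n\ge 3$ and $[n]=\{1,\dots,n\}$. A stable $n$-labeled tree is a finite tree with exactly $n$ leaves, labeled bijectively by $[n]$, in which every non-leaf (internal) vertex has degree at least 3. $V(G)$ denotes the set of internal vertices of $G$, and $S(n)$ the set of stable $n$-labeled trees (up to label-preserving isomorphism). We write $G\rightsquigarrow G'$ ($G'$ is a contraction of $G$) if $G'$ is obtained from $G$ by collapsing connected sets of internal vertices (together with the edges among them) to single vertices; this induces a surjection $\pi:V(G)\to V(G')$, and we write $\{v_1,\dots,v_k\}\rightsquigarrow v'$ when $\pi^{-1}(v')=\{v_1,\dots,v_k\}$. An extremal assignment of order $n$ is a rule $Z$ assigning to every $G\in S(n)$ a subset $Z(G)\subset V(G)$ such that (a) $Z(G)\neq V(G)$ for all $G$, and (b) whenever $G\rightsquigarrow G'$ and $\{v_1,\dots,v_k\}\rightsquigarrow v'$, we have $v'\in Z(G')$ if and only if $v_1,\dots,v_k\in Z(G)$. For $W\subset V(G)$, a vertex $v\in W$ is isolated (in $W$) if no vertex adjacent to $v$ lies in $W$. Two extremal assignments $Z_1,Z_2$ of order $n$ are equivalent, $Z_1\sim Z_2$, if for every $G\in S(n)$ each vertex of $Z_1(G)\setminus Z_2(G)$ is a vertex of degree 3 that is isolated in $Z_1(G)\setminus Z_2(G)$, and likewise each vertex of $Z_2(G)\setminus Z_1(G)$ is of degree 3 and isolated in $Z_2(G)\setminus Z_1(G)$. *)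

(* Defs.v *)
From mathcomp Require Import all_boot.
Set Implicit Arguments. Unset Strict Implicit. Unset Printing Implicit Defensive.

(* Vertices of a tree with n leaves and m internal vertices:
   leaves are  inl i  (i : 'I_n, leaf labelled i+1),
   internal vertices are  inr j  (j : 'I_m). *)
Definition vtx (n m : nat) : finType := ('I_n + 'I_m)%type.

(* A stable n-labelled tree.  A (finite simple) tree is a connected graph
   with |E| = |V| - 1; edges counted as ordered pairs, hence the doubling. *)
Record stree (n : nat) : Type := STree {
  nint : nat;
  sadj : rel (vtx n nint);
  sadj_sym : forall x y, sadj x y = sadj y x;
  sadj_irr : forall x, ~~ sadj x x;
  s_connected : forall x y, connect sadj x y;
  s_edges : #|[set p : vtx n nint * vtx n nint | sadj p.1 p.2]|
            = (#|vtx n nint|).-1.*2;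
  s_leaf_deg : forall i : 'I_n, #|[set y | sadj (inl i) y]| = 1;
  s_int_deg : forall j : 'I_nint, 3 <= #|[set y | sadj (inr j) y]|
}.

Definition V n (G : stree n) : finType := 'I_(nint G).

Definition deg n (G : stree n) (v : V G) : nat := #|[set y | @sadj n G (inr v) y]|.

Definition iadj n (G : stree n) : rel (V G) := fun u v => @sadj n G (inr u) (inr v).

Definition vext n (G G' : stree n) (pi : V G -> V G') (x : vtx n (nint G))
  : vtx n (nint G') :=
  match x with inl i => inl i | inr j => inr (pi j) end.

(* G ~> G' via pi : V(G) -> V(G'): G' is obtained by collapsing the connected
   sets of internal vertices pi^-1(v') (v' in V(G')) to single vertices, with
   the edges among them. *)
Definition contraction n (G G' : stree n) (pi : V G -> V G') : Prop :=
  [/\ (forall v' : V G', exists v : V G, pi v = v'),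
      (forall a b : V G, pi a = pi b ->
         connect (fun x y => [&& iadj x y, pi x == pi a & pi y == pi a]) a b) &
      (forall x' y' : vtx n (nint G'),
         @sadj n G' x' y' =
         (x' != y') && [exists x, exists y, [&& vext pi x == x', vext pi y == y'
                                              & @sadj n G x y]])].

Definition assignment n := forall G : stree n, {set V G}.

Definition extremal n (Z : assignment n) : Prop :=
  (forall G : stree n, Z G != [set: V G]) /\
  (forall (G G' : stree n) (pi : V G -> V G'), contraction pi ->
     forall v' : V G', (v' \in Z G') = [forall v, (pi v == v') ==> (v \in Z G)]).

Definition isolated n (G : stree n) (W : {set V G}) (v : V G) : bool :=
  [forall u, iadj v u ==> (u \notin W)].

Definition half_equiv n (Z1 Z2 : assignment n) : Prop :=
  forall (G : stree n) (v : V G), v \in Z1 G :\: Z2 G ->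
    deg v = 3 /\ isolated (Z1 G :\: Z2 G) v.

Definition ext_equiv n (Z1 Z2 : assignment n) : Prop :=
  half_equiv Z1 Z2 /\ half_equiv Z2 Z1.

(* Main.v *)
Require Import Defs.
From mathcomp Require Import all_boot zify.
Set Implicit Arguments. Unset Strict Implicit. Unset Printing Implicit Defensive.
Fixpoint ball (T : finType) (e : rel T) (r : T) (k : nat) : {set T} :=
  if k is k'.+1 then ball e r k' :|: [set y | [exists x in ball e r k', e x y]]
  else [set r].

Lemma ball_path (T : finType) (e : rel T) (r : T) p : forall a k,
  a \in ball e r k -> path e a p -> last a p \in ball e r (k + size p).
Proof.
elim: p => [|b p IH] a k ha /=; first by rewrite addn0.
case/andP=> eab pth; rewrite addnS -addSn; apply: IH pth => /=.
rewrite in_setU; apply/orP; right; rewrite inE; apply/existsP; exists a.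
by rewrite ha eab.
Qed.

Lemma ex_ball (T : finType) (e : rel T) (r : T)
  (econn : forall x y, connect e x y) x : exists k, x \in ball e r k.
Proof.
have /connectP [p pth ->] := econn r x.
exists (0 + size p); apply: ball_path => //; by rewrite inE.
Qed.

Lemma edges_lb (T : finType) (e : rel T) (esym : forall x y, e x y = e y x)
  (econn : forall x y, connect e x y) :
  (#|T|.-1).*2 <= #|[set p : T * T | e p.1 p.2]|.
Proof.
case: (pickP (@predT T)) => [r _|h0]; last first.
  by rewrite (eq_card0 h0).
pose dist x := ex_minn (ex_ball r econn x).
have distP : forall x, x != r -> exists2 y, e y x & dist y < dist x.
  move=> x xr; rewrite /dist; case: ex_minnP => d xd mind.
  case: d xd mind => [|d] xd mind; first by move: xd; rewrite inE => /eqP xr'; rewrite xr' eqxx in xr.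
  move: xd; rewrite /= in_setU => /orP [xd|].
    by have := mind d xd; rewrite ltnn.
  rewrite inE => /existsP [y /andP [yd eyx]]; exists y => //.
  case: ex_minnP => d' _ mind'; exact: (leq_ltn_trans (mind' d yd)).
pose par x := odflt r [pick y | e y x && (dist y < dist x)].
have parP : forall x, x != r -> e (par x) x && (dist (par x) < dist x).
  move=> x xr; rewrite /par; case: pickP => [y //|h].
  have [y eyx dy] := distP x xr; by have := h y; rewrite eyx dy.
pose A := [set x | x != r].
pose I1 := [set (par x, x) | x in A].
pose I2 := [set (x, par x) | x in A].
have cA : #|A| = #|T|.-1 by rewrite -(cardsC1 r); apply: eq_card => x; rewrite !inE.
have c1 : #|I1| = #|A| by apply: card_in_imset => x y _ _ [].
have c2 : #|I2| = #|A| by apply: card_in_imset => x y _ _ [].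
have c12 : I1 :&: I2 = set0.
  apply/setP => [[a b]]; rewrite !inE; apply/negP => /andP [/imsetP [x xA [-> ->]] /imsetP [y yA [e1 e2]]].
  move: xA yA; rewrite !inE => xA yA.
  have /andP [_ h1] := parP x xA; have /andP [_ h2] := parP y yA.
  rewrite -e2 -e1 in h2.
  by have := ltn_trans h1 h2; rewrite ltnn.
have sub : I1 :|: I2 \subset [set p : T * T | e p.1 p.2].
  apply/subsetP => [[a b]]; rewrite !inE => /orP [] /imsetP [x xA [-> ->]] /=;
  move: xA; rewrite inE => xA; have := parP x xA => /andP [h _] //.
  by rewrite esym.
have := subset_leq_card sub; rewrite cardsU c12 cards0 subn0 c1 c2 cA.
by rewrite addnn.
Qed.

Lemma no_triangle (T : finType) (e : rel T) (esym : forall x y, e x y = e y x)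
  (eirr : forall x, ~~ e x x) (econn : forall x y, connect e x y)
  (hE : #|[set p : T * T | e p.1 p.2]| = (#|T|.-1).*2) a b c :
  e a b -> e b c -> e a c -> False.
Proof.
move=> eab ebc eac.
have nab : a != b by apply: contraTneq eab => ->; rewrite eirr.
have nbc : b != c by apply: contraTneq ebc => ->; rewrite eirr.
have nac : a != c by apply: contraTneq eac => ->; rewrite eirr.
pose e' := fun x y => e x y && ~~ (((x == a) && (y == c)) || ((x == c) && (y == a))).
have esym' : forall x y, e' x y = e' y x.
  move=> x y; rewrite /e' esym; congr (_ && ~~ _); rewrite orbC; congr (_ || _); apply: andbC.
have econn' : forall x y, connect e' x y.
  move=> x y; apply: (connect_sub _ (econn x y)) => {x y} x y exy.
  case: (boolP (((x == a) && (y == c)) || ((x == c) && (y == a)))) => h; last first.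
    by apply: connect1; rewrite /e' exy h.
  have nba : b != a by rewrite eq_sym.
  have ncb : c != b by rewrite eq_sym.
  have nca : c != a by rewrite eq_sym.
  case/orP: h => /andP [/eqP -> /eqP ->];
  apply: (connect_trans (y := b)); apply: connect1; rewrite /e' ?eqxx
    ?(negPf nab) ?(negPf nba) ?(negPf nbc) ?(negPf ncb) ?(negPf nac) ?(negPf nca)
    ?andbF ?andFb ?orbF /= ?andbT //; by rewrite esym.
have lb := edges_lb esym' econn'.
have eqE : [set p : T * T | e' p.1 p.2] =
    [set p : T * T | e p.1 p.2] :\: [set (a, c); (c, a)].
  apply/setP => [[x y]]; rewrite !inE /e' /=.
  by rewrite andbC !xpair_eqE.
have inter : [set p : T * T | e p.1 p.2] :&: [set (a, c); (c, a)] = [set (a, c); (c, a)].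
  apply/setIidPr/subsetP => p; rewrite !inE => /orP [] /eqP -> //=.
  by rewrite esym.
move: lb; rewrite eqE cardsD inter cards2 hE.
have : (a, c) != (c, a) by rewrite xpair_eqE negb_and nac.
move=> ->.
have : 0 < #|[set p : T * T | e p.1 p.2]|.
  by apply/card_gt0P; exists (a, c); rewrite inE.
rewrite hE.
case: (#|T|.-1) => [|k] //= _.
rewrite doubleS !subSS subn0; by rewrite ltnNge leqnSn.
Qed.

Section Contract.
Variables (n : nat) (G : stree n) (u v : V G) (d : 'I_(nint G).-1).
Hypothesis huv : iadj u v.
Local Notation m := (nint G).

Definition piv (j : 'I_m) : 'I_m.-1 := insubd d (unbump v (if j == v then u else j)).

Lemma nuv : u != v.
Proof. apply: contraTneq huv => ->; rewrite /iadj; exact: sadj_irr. Qed.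

Lemma piv_val j : val (piv j) = unbump v (if j == v then u else j).
Proof.
rewrite /piv val_insubd.
set k := (if j == v then u else j).
have kv : val k != val v.
  rewrite /k; case: (eqVneq j v) => [_|jv] //.
  by move: nuv; apply: contra => /eqP h; apply/eqP; exact: ord_inj h.
have km : val k < m by apply: ltn_ord.
have vm : val v < m by apply: ltn_ord.
have lt : unbump v k < m.-1.
  rewrite /unbump; move: kv km vm; case: (ltnP v k) => h /= kv km vm; lia.
by rewrite lt.
Qed.

Lemma unbump_inj (a b : nat) : a != v -> b != v -> unbump v a = unbump v b -> a = b.
Proof.
rewrite /unbump => av bv; case: (ltnP v a) => h1; case: (ltnP v b) => h2 /=; lia.
Qed.

Lemma piv_eq a b : piv a = piv b -> a = b \/ (a = u /\ b = v) \/ (a = v /\ b = u).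
Proof.
move=> /(congr1 val); rewrite !piv_val => /unbump_inj.
have nv : forall j : 'I_m, val (if j == v then u else j) != val v.
  move=> j; case: (eqVneq j v) => [_|jv] //.
  by move: nuv; apply: contra => /eqP h; apply/eqP; exact: ord_inj h.
move=> /(_ (nv a) (nv b)) /val_inj.
case: (eqVneq a v) => [->|av]; case: (eqVneq b v) => [->|bv] //=; by intuition.
Qed.

Lemma piv_uv : piv u = piv v.
Proof. by apply: val_inj; rewrite !piv_val eqxx (negPf nuv). Qed.

Lemma piv_surj (j' : 'I_m.-1) : exists2 j, piv j = j' & j != v.
Proof.
have hb : bump v j' < m.
  have := ltn_ord j'; have := ltn_ord v; rewrite /bump; case: leqP => /= ?; lia.
exists (Ordinal hb).
  apply: val_inj; rewrite piv_val /=.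
  have -> : (Ordinal hb == v) = false.
    apply/negbTE; apply/eqP => /(congr1 val) /= h.
    by have := neq_bump v j'; rewrite h eqxx.
  exact: bumpK.
apply/eqP => /(congr1 val) /= h.
by have := neq_bump v j'; rewrite h eqxx.
Qed.


Definition vx (x : vtx n m) : vtx n m.-1 :=
  match x with inl i => inl i | inr j => inr (piv j) end.

Lemma tri x : sadj (inr u) x -> sadj (inr v) x -> False.
Proof.
move=> h1 h2; exact: (no_triangle (@sadj_sym n G) (@sadj_irr n G) (@s_connected n G)
   (@s_edges n G) huv h2 h1).
Qed.

Lemma tri' x : sadj x (inr u) -> sadj x (inr v) -> False.
Proof. by rewrite !(sadj_sym x); exact: tri. Qed.

Lemma vx_eq x y : vx x = vx y ->
  x = y \/ (x = inr u /\ y = inr v) \/ (x = inr v /\ y = inr u).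
Proof.
case: x => [i|a]; case: y => [i'|b] //=; first by case=> ->; left.
case=> /piv_eq [->|[[-> ->]|[-> ->]]]; by intuition.
Qed.

Lemma vx_uv : vx (inr u) = vx (inr v).
Proof. by rewrite /= piv_uv. Qed.

Lemma vx_surj x' : exists x, vx x = x'.
Proof.
case: x' => [i|j']; first by exists (inl i).
by have [j <- _] := piv_surj j'; exists (inr j).
Qed.

Definition adj' : rel (vtx n m.-1) := fun x' y' =>
  (x' != y') && [exists x, exists y, [&& vx x == x', vx y == y' & sadj x y]].

Lemma adj'_sym x y : adj' x y = adj' y x.
Proof.
rewrite /adj' eq_sym; congr (_ && _).
apply/existsP/existsP => [] [a /existsP [b /and3P [h1 h2 h3]]]; exists b;
  apply/existsP; exists a; by rewrite h1 h2 sadj_sym h3.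
Qed.

Lemma adj'_irr x : ~~ adj' x x.
Proof. by rewrite /adj' eqxx. Qed.

Lemma adj'E x y : sadj x y -> ~ (x = inr u /\ y = inr v) -> ~ (x = inr v /\ y = inr u) ->
  adj' (vx x) (vx y).
Proof.
move=> sxy n1 n2; apply/andP; split.
  apply/eqP => /vx_eq [exy|[h|h]] //.
  by move: sxy; rewrite exy (negPf (sadj_irr _)).
by apply/existsP; exists x; apply/existsP; exists y; rewrite !eqxx sxy.
Qed.

Lemma connect_map (T T' : finType) (e : rel T) (e' : rel T') (h : T -> T') :
  (forall x y, e x y -> h x = h y \/ e' (h x) (h y)) ->
  forall x y, connect e x y -> connect e' (h x) (h y).
Proof.
move=> H x y /connectP [p pth ->]; elim: p x pth => [|z p IH] x /=; first by [].
case/andP => exz pth; apply: connect_trans (IH z pth).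
by case: (H _ _ exz) => [->|?]; [exact: connect0 | exact: connect1].
Qed.

Lemma adj'_conn x' y' : connect adj' x' y'.
Proof.
have [x <-] := vx_surj x'; have [y <-] := vx_surj y'.
apply: (connect_map _ (@s_connected n G x y)) => a b sab.
case: (boolP ((a == inr u) && (b == inr v))) => [/andP [/eqP -> /eqP ->]|h1];
  first by left; exact: vx_uv.
case: (boolP ((a == inr v) && (b == inr u))) => [/andP [/eqP -> /eqP ->]|h2];
  first by left; symmetry; exact: vx_uv.
right; apply: adj'E => //; case=> ea eb; [move: h1|move: h2]; by rewrite ea eb !eqxx.
Qed.


Lemma card_vtx k : #|vtx n k| = n + k.
Proof. by rewrite /vtx card_sum !card_ord. Qed.

Lemma m_ge2 : 2 <= m.
Proof.
have h : nat_of_ord u != nat_of_ord v by exact: nuv.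
have := ltn_ord u; have := ltn_ord v; move: h; lia.
Qed.

Lemma adj'_edges : #|[set p : vtx n m.-1 * vtx n m.-1 | adj' p.1 p.2]|
   = (#|vtx n m.-1|).-1.*2.
Proof.
pose E := [set p : vtx n m * vtx n m | sadj p.1 p.2].
pose P := [set (inr u, inr v); (inr v, inr u)] : {set vtx n m * vtx n m}.
pose D := E :\: P.
pose h2 := fun p : vtx n m * vtx n m => (vx p.1, vx p.2).
have cD : #|D| = #|E| - 2.
  rewrite cardsD.
  have -> : E :&: P = P.
    apply/setIidPr/subsetP => p; rewrite !inE => /orP [] /eqP -> //=.
    by rewrite sadj_sym.
  rewrite cards2.
  have -> // : ((inr u, inr v) : vtx n m * vtx n m) != (inr v, inr u).
  by apply/negP => /eqP [e _]; move: nuv; rewrite e eqxx.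
have eqE' : [set p : vtx n m.-1 * vtx n m.-1 | adj' p.1 p.2] = h2 @: D.
  apply/setP => [[x' y']]; rewrite inE /=; apply/idP/imsetP.
    case/andP => ne /existsP [x /existsP [y /and3P [/eqP hx /eqP hy sxy]]].
    exists (x, y); last by rewrite /h2 /= hx hy.
    rewrite !inE /= sxy andbT !xpair_eqE; apply/negP => /orP [] /andP [/eqP ex /eqP ey];
      move: ne; rewrite -hx -hy ex ey ?vx_uv ?eqxx //.
  case=> [[x y]]; rewrite !inE /= !xpair_eqE => /andP [np sxy] [-> ->].
  apply: adj'E => //; move=> [ex ey]; move: np; by rewrite ex ey !eqxx /= ?orbT.
have inj : {in D &, injective h2}.
  move=> [x y] [x' y']; rewrite !inE /= !xpair_eqE => /andP [np hp] /andP [nq hq] [e1 e2].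
  have Hi := @sadj_irr n G.
  case: (vx_eq e1) => [E1|[[E1 E1']|[E1 E1']]]; case: (vx_eq e2) => [E2|[[E2 E2']|[E2 E2']]];
    subst => //; exfalso;
    try (by move: np; rewrite !eqxx);
    try (by move: nq; rewrite !eqxx);
    try (by move: hp; rewrite (negPf (Hi _)));
    try (by move: hq; rewrite (negPf (Hi _)));
    try (by apply: (tri' hp hq));
    try (by apply: (tri' hq hp));
    try (by apply: (tri hp hq));
    try (by apply: (tri hq hp)).
rewrite eqE' (card_in_imset inj) cD (@s_edges n G) !card_vtx.
have := m_ge2; rewrite -!subn1 -!addnn; lia.
Qed.


Lemma vx_inl x i : vx x = inl i -> x = inl i.
Proof. by case: x => [j /= [->]|j]. Qed.

Lemma adj'_leaf (i : 'I_n) : #|[set y | adj' (inl i) y]| = 1.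
Proof.
have /eqP /cards1P [y0 hN] := @s_leaf_deg n G i.
have hy0 : sadj (inl i) y0.
  have : y0 \in [set y0] by rewrite inE.
  by rewrite -hN inE.
have -> : [set y | adj' (inl i) y] = [set vx y0].
  apply/setP => y'; rewrite !inE; apply/idP/eqP.
    case/andP => ne /existsP [x /existsP [y /and3P [/eqP /vx_inl hx /eqP hy sxy]]].
    have : y \in [set y | sadj (inl i) y] by rewrite inE -hx.
    by rewrite hN inE => /eqP <-.
  move=> ->; rewrite -/(vx (inl i)); apply: adj'E => //; by move=> [].
exact: cards1.
Qed.

Lemma vx_ninj x y : x \notin [set inr u; inr v] -> vx x = vx y -> x = y.
Proof.
rewrite !inE => hx /vx_eq [//|[[ex _]|[ex _]]]; by move: hx; rewrite ex eqxx ?orbT.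
Qed.

Lemma adj'_int_other (j' : 'I_m.-1) : j' != piv u ->
  3 <= #|[set y | adj' (inr j') y]|.
Proof.
move=> nj.
have [j hj jv] := piv_surj j'.
have ju : j != u by apply: contraNneq nj => e; rewrite -hj e.
have ex : inr j' = vx (inr j) by rewrite /= hj.
pose N := [set y | sadj (inr j) y].
have inj : {in N &, injective vx}.
  move=> x y; rewrite !inE => hx hy /vx_eq [//|[[e1 e2]|[e1 e2]]]; subst; exfalso.
    exact: (tri' hx hy).
  exact: (tri' hy hx).
have sub : vx @: N \subset [set y | adj' (inr j') y].
  apply/subsetP => y' /imsetP [x xN ->]; rewrite inE ex; move: xN; rewrite inE => sx.
  apply: adj'E => //; move=> [e _]; move: e => [e]; [move: ju | move: jv]; by rewrite e eqxx.
apply: leq_trans (subset_leq_card sub); rewrite (card_in_imset inj).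
exact: (@s_int_deg n G j).
Qed.

Lemma adj'_w : 4 <= #|[set y | adj' (inr (piv u)) y]|.
Proof.
pose NU := [set y | sadj (inr u) y].
pose NV := [set y | sadj (inr v) y].
pose S := (NU :|: NV) :\: [set inr u; inr v].
have inj : {in S &, injective vx}.
  move=> x y; rewrite inE => /andP [hx _] _; exact: vx_ninj.
have sub : vx @: S \subset [set y | adj' (inr (piv u)) y].
  apply/subsetP => y' /imsetP [x xS ->]; rewrite inE.
  move: xS; rewrite !inE negb_or => /andP [/andP [nxu nxv] /orP [hx|hx]].
    change (adj' (vx (inr u)) (vx x)); apply: adj'E => //; move=> [e1 e2]; [move: nxv | move: nxv]; rewrite e2 ?eqxx //.
    by move: nuv; rewrite -(inj_eq (@inr_inj 'I_n _)) -e1 eqxx.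
  rewrite piv_uv; change (adj' (vx (inr v)) (vx x)); apply: adj'E => //; move=> [e1 e2]; [move: nxu | move: nxu];
    rewrite e2 ?eqxx //.
  by move: nuv; rewrite -(inj_eq (@inr_inj 'I_n _)) e1 eqxx.
apply: leq_trans (subset_leq_card sub); rewrite (card_in_imset inj).
have dis : NU :&: NV = set0.
  apply/setP => x; rewrite !inE; apply/negP => /andP [h1 h2]; exact: tri h1 h2.
have cU : #|NU :|: NV| = #|NU| + #|NV| by rewrite cardsU dis cards0 subn0.
have c1 : 3 <= #|NU| := @s_int_deg n G u.
have c2 : 3 <= #|NV| := @s_int_deg n G v.
have c3 : #|(NU :|: NV) :&: [set inr u; inr v]| <= 2.
  apply: leq_trans (subset_leq_card (subsetIr _ _)) _; rewrite cards2; by case: (_ != _).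
rewrite /S cardsD cU; lia.
Qed.

End Contract.

Lemma Gc_int n (G : stree n) (u v : V G) (d : 'I_(nint G).-1) (huv : iadj u v)
  (j' : 'I_(nint G).-1) : 3 <= #|[set y | adj' u v d (inr j') y]|.
Proof.
case: (eqVneq j' (piv u v d u)) => [->|ne]; last exact: adj'_int_other ne.
exact: leq_trans _ (adj'_w d huv).
Qed.

Definition Gc n (G : stree n) (u v : V G) (d : 'I_(nint G).-1) (huv : iadj u v) : stree n :=
  @STree n (nint G).-1 (adj' u v d) (adj'_sym u v d) (adj'_irr u v d)
    (adj'_conn d huv) (adj'_edges d huv) (adj'_leaf d huv) (Gc_int d huv).

Lemma Gc_contr n (G : stree n) (u v : V G) (d : 'I_(nint G).-1) (huv : iadj u v) :
  @contraction n G (Gc d huv) (piv u v d).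
Proof.
split.
- move=> v'; have [j hj _] := piv_surj d huv v'; by exists j.
- move=> a b /(piv_eq huv) [->|[[-> ->]|[-> ->]]]; first exact: connect0.
    apply: connect1; by rewrite huv (piv_uv d huv) !eqxx.
  apply: connect1; rewrite /iadj sadj_sym (piv_uv d huv) !eqxx !andbT; exact: huv.
- by [].
Qed.

Lemma Gc_Z n (G : stree n) (u v : V G) (d : 'I_(nint G).-1) (huv : iadj u v)
  (Z : assignment n) : extremal Z ->
  ((piv u v d u : V (Gc d huv)) \in Z (Gc d huv)) = (u \in Z G) && (v \in Z G).
Proof.
case=> _ hZ; rewrite (hZ _ _ _ (Gc_contr d huv)).
apply/forallP/andP.
  move=> h; split; [have := h u | have := h v]; rewrite ?(piv_uv d huv) eqxx //.
case=> hu hv a; apply/implyP => /eqP /(piv_eq huv) [->|[[-> _]|[-> _]]] //.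
Qed.

Lemma trans_half n (A B C : assignment n) : extremal A -> extremal C ->
  half_equiv A B -> half_equiv B C -> half_equiv A C.
Proof.
move=> eA eC hAB hBC.
have degp : forall (G : stree n) (x : V G), x \in A G :\: C G -> deg x = 3.
  move=> G x; rewrite inE => /andP [nC xA].
  case: (boolP (x \in B G)) => xB.
    by case: (hBC G x); rewrite // inE xB nC.
  by case: (hAB G x); rewrite // inE xB xA.
move=> G x hx; split; first exact: degp hx.
apply/forallP => y; apply/implyP => hxy; apply/negP => hy.
have nxy : x != y by apply: contraTneq hxy => ->; rewrite /iadj (negPf (sadj_irr _)).
have m2 : 0 < (nint G).-1.
  have h : nat_of_ord x != nat_of_ord y by exact: nxy.
  have := ltn_ord x; have := ltn_ord y; move: h; lia.
pose d := Ordinal m2.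
have := degp (Gc d hxy) (piv x y d x).
move: hx hy; rewrite !inE => /andP [xC xA] /andP [yC yA].
rewrite !(Gc_Z d hxy) // xA yA (negPf xC) /= => /(_ isT) h3.
by have := adj'_w d hxy; rewrite -/(deg (G:=Gc d hxy) (piv x y d x)) h3.
Qed.

Theorem mainTheorem1 (n : nat) (hn : 3 <= n) :
  (forall Z : assignment n, extremal Z -> ext_equiv Z Z) /\
  (forall Z1 Z2 : assignment n, extremal Z1 -> extremal Z2 ->
     ext_equiv Z1 Z2 -> ext_equiv Z2 Z1) /\
  (forall Z1 Z2 Z3 : assignment n, extremal Z1 -> extremal Z2 -> extremal Z3 ->
     ext_equiv Z1 Z2 -> ext_equiv Z2 Z3 -> ext_equiv Z1 Z3).
Proof.
split; [|split].
- move=> Z _; split=> G x; by rewrite setDv inE.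
- by move=> Z1 Z2 _ _ [h1 h2]; split.
- move=> Z1 Z2 Z3 e1 e2 e3 [h12 h21] [h23 h32]; split.
    exact: trans_half e1 e3 h12 h23.
  exact: trans_half e3 e1 h32 h21.
Qed.
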